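(* Let $f:\{0,1,2,3,4,5\}^*\to\{0,1,2,3,4,5\}^*$ be the morphism $f(0)=01$, $f(1)=23$, $f(2)=45$, $f(3)=02$, $f(4)=05$, $f(5)=25$, and let $\rho$ be the coding $\rho(0)=\rho(1)=\rho(2)=\rho(3)=0$, $\rho(4)=\rho(5)=1$. Let $\mathbf{w}=\rho(f^\omega(0))$, an infinite word over $\{0,1\}$. Then $\mathbf{w}$ contains no squares of order $\geq 3$ and contains exactly $5$ distinct squares. Moreover, $\mathbf{w}$ is the lexicographically least infinite binary word among all infinite binary words that are generated by a $2$-automaton with at most $6$ states, contain no square of order $\geq 3$, and contain only $5$ distinct squares.
   Context: A square is a nonempty word of the form $xx$; its order is $|x|$. ''Contains'' means as a factor (contiguous subword). A morphism $h$ satisfies $h(xy)=h(x)h(y)$; if $h(a)=ax$ with $h^i(x)\neq\epsilon$ for all $i$, then $h^\omega(a)=a\,x\,h(x)\,h^2(x)\cdots$ is the fixed point of $h$ starting with $a$. A coding is a morphism sending letters to letters. A $k$-automaton (DFAO) with $s$ states generates the infinite word $(a_n)_{n\ge0}$ if, on input the base-$k$ representation of $n$ (most significant digit first), it ends in a state whose output is $a_n$. Equivalently (Cobham), the word is the image under a coding of a fixed point of a $k$-uniform morphism over an alphabet of $s$ letters. *)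

(* Defs.v *)
From mathcomp Require Import all_boot.
Set Implicit Arguments. Unset Strict Implicit. Unset Printing Implicit Defensive.

(* Infinite words over {0,1} are functions nat -> bool (false = 0, true = 1). *)
Definition bword := nat -> bool.

Definition factor_at (w : bword) (i len : nat) : seq bool :=
  [seq w (i + k) | k <- iota 0 len].

Definition is_factor (w : bword) (s : seq bool) : Prop :=
  exists i, factor_at w i (size s) = s.

Definition is_square_of_order (s : seq bool) (n : nat) : Prop :=
  exists x : seq bool, size x = n /\ 0 < n /\ s = x ++ x.

Definition is_square (s : seq bool) : Prop := exists n, is_square_of_order s n.

Definition no_square_of_order_ge (w : bword) (m : nat) : Prop :=
  forall s n, is_factor w s -> is_square_of_order s n -> n < m.

Definition num_distinct_squares (w : bword) (k : nat) : Prop :=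
  exists S : seq (seq bool), uniq S /\ size S = k /\
    forall s, s \in S <-> (is_square s /\ is_factor w s).

Definition lex_le (u v : bword) : Prop :=
  (forall n, u n = v n) \/
  exists n, (forall i, i < n -> u i = v i) /\ u n = false /\ v n = true.

(* Base-2 representation of n, most significant digit first, no leading
   zeros; the representation of 0 is the empty word. Digit 1 = true. *)
Fixpoint lsb_digits (fuel n : nat) : seq bool :=
  match fuel with
  | 0 => [::]
  | fuel'.+1 => if n == 0 then [::] else odd n :: lsb_digits fuel' n./2
  end.
Definition base2 (n : nat) : seq bool := rev (lsb_digits n n).

Record dfao2 (s : nat) := Dfao2 {
  q0 : 'I_s;
  delta : 'I_s -> bool -> 'I_s;
  out : 'I_s -> bool
}.

Definition generates (s : nat) (A : dfao2 s) (w : bword) : Prop :=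
  forall n, w n = out A (foldl (delta A) (q0 A) (base2 n)).

Definition two_automatic_le (m : nat) (w : bword) : Prop :=
  exists s, s <= m /\ exists A : dfao2 s, generates A w.

Definition f_img (a : nat) : seq nat :=
  match a with
  | 0 => [:: 0; 1]
  | 1 => [:: 2; 3]
  | 2 => [:: 4; 5]
  | 3 => [:: 0; 2]
  | 4 => [:: 0; 5]
  | _ => [:: 2; 5]
  end.

Definition f_seq (s : seq nat) : seq nat := flatten (map f_img s).

(* f^omega(0): its n-th letter is the n-th letter of f^(n+1)(0), which is a
   prefix of f^omega(0) of length 2^(n+1) > n. *)
Definition f_fix (n : nat) : nat := nth 0 (iter n.+1 f_seq [:: 0]) n.

Definition rho (a : nat) : bool := (a == 4) || (a == 5).

Definition w_word : bword := fun n => rho (f_fix n).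

(* Main.v *)
Require Import Defs.
From mathcomp Require Import all_boot zify.
Set Implicit Arguments. Unset Strict Implicit. Unset Printing Implicit Defensive.


Lemma lsb_fuel f1 f2 n : n <= f1 -> n <= f2 -> lsb_digits f1 n = lsb_digits f2 n.
Proof.
elim: f1 f2 n => [|f1 IH] [|f2] n /= h1 h2.
- by [].
- have -> : n = 0 by lia. by [].
- have -> : n = 0 by lia. by [].
- case: eqP => // nz; congr (_ :: _); apply: IH; lia.
Qed.

Lemma base2_rec n : 0 < n -> base2 n = rcons (base2 n./2) (odd n).
Proof.
case: n => [//|k] _; rewrite /base2 /=.
rewrite (@lsb_fuel k (k.+1)./2 (k.+1)./2); [|lia|lia].
by rewrite rev_cons.
Qed.

Lemma base2_0 : base2 0 = [::]. Proof. by []. Qed.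

Section Run.
Variables (T : Type) (dlt : T -> bool -> T) (q0 : T).
Definition run n := foldl dlt q0 (base2 n).
Lemma run_rec n : 0 < n -> run n = dlt (run n./2) (odd n).
Proof. by move=> h; rewrite /run base2_rec // foldl_rcons. Qed.
Lemma run0 : run 0 = q0. Proof. by []. Qed.
End Run.

Definition fstep (q : nat) (b : bool) : nat := nth 0 (f_img q) b.
Definition ufast n := run fstep 0 n.

Definition I k := iter k f_seq [:: 0].

Lemma size_f_img a : size (f_img a) = 2.
Proof. by case: a => [|[|[|[|[|a]]]]]. Qed.

Lemma size_f_seq s : size (f_seq s) = (size s).*2.
Proof.
elim: s => //= a s IH; rewrite /f_seq /= size_cat -/(f_seq s) IH size_f_img; lia.
Qed.

Lemma size_I k : size (I k) = 2 ^ k.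
Proof. elim: k => //= k IH; rewrite size_f_seq IH expnS; lia. Qed.

Lemma nth_f_seq s i : i < (size s).*2 ->
  nth 0 (f_seq s) i = nth 0 (f_img (nth 0 s i./2)) (odd i).
Proof.
elim: s i => [|a s IH] i //= hi.
rewrite /f_seq /= nth_cat size_f_img -/(f_seq s).
case: i hi => [|[|i]] hi //=.
rewrite IH /=; last lia.
by rewrite subn2 negbK.
Qed.

Lemma I_S k : I k.+1 = f_seq (I k). Proof. by []. Qed.

Lemma I_prefix k i : i < 2 ^ k -> nth 0 (I k.+1) i = nth 0 (I k) i.
Proof.
elim: k i => [|k IH] i hi.
  by have -> : i = 0 by rewrite expn0 in hi; lia.
rewrite I_S nth_f_seq; last by rewrite size_I; lia.
rewrite [in RHS]I_S nth_f_seq; last by rewrite size_I; rewrite expnS in hi; lia.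
rewrite IH //. rewrite expnS in hi. rewrite ltn_half_double. lia.
Qed.

Lemma I_prefix_le k k' i : k <= k' -> i < 2 ^ k -> nth 0 (I k') i = nth 0 (I k) i.
Proof.
move=> /subnK <-; elim: (k' - k) => [|j IH] //= hi.
rewrite -I_S I_prefix ?IH //.
apply: (leq_trans hi); rewrite leq_exp2l //; lia.
Qed.

Lemma f_fix_rec n : f_fix n = fstep (f_fix n./2) (odd n).
Proof.
case: n => [//|k].
rewrite /f_fix -/(I k.+2) -/(I ((k.+1)./2).+1).
rewrite I_S nth_f_seq; last first.
  rewrite size_I. have := ltn_expl (k.+1) (isT : 1 < 2). rewrite expnS. lia.
congr fstep.
apply: I_prefix_le; first by lia.
have := ltn_expl ((k.+1)./2).+1 (isT : 1 < 2). lia.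
Qed.

Lemma ufast_f_fix n : ufast n = f_fix n.
Proof.
elim: n {-2}n (leqnn n) => [|N IH] n hn.
  by have -> : n = 0 by lia.
case: n hn => [//|k] hk.
rewrite /ufast run_rec // f_fix_rec -IH //. lia.
Qed.

Lemma fstep_lt6 q b : fstep q b < 6.
Proof. by case: q => [|[|[|[|[|q]]]]]; case: b. Qed.

Lemma f_fix_lt6 n : f_fix n < 6.
Proof. by rewrite f_fix_rec fstep_lt6. Qed.


Definition M := 35.
Definition succs (t : seq nat) : seq (seq nat) :=
  [:: take M (f_seq t); take M (drop 1 (f_seq t))].

Fixpoint clos (fuel : nat) (todo acc : seq (seq nat)) : seq (seq nat) :=
  match fuel with 0 => acc | fuel'.+1 =>
  match todo with [::] => acc | t :: todo' =>
    let nw := undup [seq x <- succs t | x \notin acc] in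
    clos fuel' (nw ++ todo') (nw ++ acc) end end.

Definition upref := map ufast (iota 0 M).
Definition TT := Eval vm_compute in clos 2000 [:: upref] [:: upref].

Definition fac_closed (T : seq (seq nat)) :=
  all (fun t => all (fun x => x \in T) (succs t)) T.

Lemma TT_ok : (upref \in TT) && fac_closed TT.
Proof. vm_compute. reflexivity. Qed.

Definition u := f_fix.
Definition ufac i m := map u (iota i m).

Lemma u2 k (b : bool) : u (b + k.*2) = fstep (u k) b.
Proof.
rewrite /u f_fix_rec; congr (fstep (f_fix _) _).
- lia.
- by case: b; rewrite ?add0n ?add1n /= odd_double.
Qed.

Lemma nth_ufac i m k : k < m -> nth 0 (ufac i m) k = u (i + k).
Proof. by move=> h; rewrite /ufac (nth_map 0) ?size_iota // nth_iota. Qed.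

Lemma size_ufac i m : size (ufac i m) = m.
Proof. by rewrite size_map size_iota. Qed.

Lemma ufac_desub i m N : m + 1 <= N.*2 ->
  ufac i m = take m (drop (odd i) (f_seq (ufac i./2 N))).
Proof.
move=> hm.
apply: (@eq_from_nth _ 0).
  rewrite size_ufac size_takel //  size_drop size_f_seq size_ufac.
  case: (odd i); lia.
move=> k; rewrite size_ufac => hk.
rewrite nth_ufac // nth_take // nth_drop nth_f_seq; last first.
  rewrite size_ufac; case: (odd i); lia.
rewrite nth_ufac; last by case: (odd i) => /=; lia.
have -> : i + k = (odd (odd i + k)) + ((i./2 + (odd i + k)./2)).*2 by lia.
by rewrite u2.
Qed.

Lemma ufac_in i : ufac i M \in TT.
Proof.
elim: i {-2}i (leqnn i) => [|N IH] i hi.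
  have -> : i = 0 by lia.
  have -> : ufac 0 M = upref.
    by rewrite /upref /ufac; apply: eq_map => x; rewrite ufast_f_fix.
  by case/andP: TT_ok.
case: (posnP i) => [->|ipos].
  have -> : ufac 0 M = upref.
    by rewrite /upref /ufac; apply: eq_map => x; rewrite ufast_f_fix.
  by case/andP: TT_ok.
have h := IH i./2 ltac:(lia).
case/andP: TT_ok => _ /allP /(_ _ h) /=.
rewrite (@ufac_desub i M M) //.
by case: (odd i) => /=; rewrite ?drop0; case/and3P.
Qed.

Lemma u_lt6 n : u n < 6.
Proof. exact: f_fix_lt6. Qed.


Definition relt (R : seq bool) x y := nth false R (x * 6 + y).
Definition pi0 := mkseq (fun k => rho (k %/ 6) == rho (k %% 6)) 36.
Definition lift R (e : bool) :=
  mkseq (fun k => relt R (fstep (k %/ 6) e) (fstep (k %% 6) e)) 36.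
Definition conj R1 R2 := mkseq (fun k => nth false R1 k && nth false R2 k) 36.

Lemma rel_mk F x y : x < 6 -> y < 6 -> relt (mkseq F 36) x y = F (x * 6 + y).
Proof. by move=> hx hy; rewrite /relt nth_mkseq //; lia. Qed.

Lemma rel_lift R e x y : x < 6 -> y < 6 ->
  relt (lift R e) x y = relt R (fstep x e) (fstep y e).
Proof.
move=> hx hy; rewrite /lift rel_mk //.
have -> : (x * 6 + y) %/ 6 = x by lia.
by have -> : (x * 6 + y) %% 6 = y by lia.
Qed.

Lemma rel_conj R1 R2 x y : x < 6 -> y < 6 ->
  relt (conj R1 R2) x y = relt R1 x y && relt R2 x y.
Proof. by move=> hx hy; rewrite /conj rel_mk. Qed.

Lemma rel_pi0 x y : x < 6 -> y < 6 -> relt pi0 x y = (rho x == rho y).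
Proof.
move=> hx hy; rewrite /pi0 rel_mk //.
have -> : (x * 6 + y) %/ 6 = x by lia.
by have -> : (x * 6 + y) %% 6 = y by lia.
Qed.

Definition state := (bool * seq bool * seq bool * seq bool)%type.

Definition relAt (st : state) P s :=
  let: (c, Rl, Rm, Rr) := st in
  if s == 0 then Rl else if s == P + c - 1 then Rr else Rm.

Definition stc (st : state) : bool := let: (c, _, _, _) := st in c.
Definition stm (st : state) := let: (_, _, Rm, _) := st in Rm.

Definition Sq (st : state) P a :=
  forall s, s < P + stc st -> relt (relAt st P s) (u (a + s)) (u (a + s + P)).

Definition desc (st : state) (al : bool) : state :=
  let: (c, Rl, Rm, Rr) := st in
  (al || c,
   if al then lift Rl true else conj (lift Rl false) (lift Rm true),
   conj (lift Rm false) (lift Rm true),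
   if al != c then lift Rr false else conj (lift Rm false) (lift Rr true)).

Ltac relat := rewrite /relAt; repeat (case: eqP => ?); try reflexivity; exfalso; lia.

Lemma desc_ok st P a : Sq st P a -> ~~ odd P -> 18 <= P ->
  Sq (desc st (odd a)) P./2 a./2.
Proof.
case: st => [[[c Rl] Rm] Rr] H hev hP.
set Q := P./2; set h := a./2.
have hPQ : P = Q.*2 by rewrite /Q; lia.
have ha : a = odd a + h.*2 by rewrite /h; lia.
have liftH : forall R (e : bool) k s, a <= e + k.*2 -> e + k.*2 < a + P + c ->
    s = e + k.*2 - a -> relAt (c, Rl, Rm, Rr) P s = R ->
    relt (lift R e) (u k) (u (k + Q)).
  move=> R e k s h1 h2 hs hR.
  rewrite rel_lift ?u_lt6 // -!u2 -hR.
  have := H s; rewrite /= => /(_ ltac:(lia)).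
  have -> : a + s = e + k.*2 by lia.
  by have -> : e + k.*2 + P = e + (k + Q).*2 by lia.
move=> s' /= hs'.
have hu6 : forall n, u n < 6 := u_lt6.
rewrite /relAt.
move: ha hs'; case: (odd a) => ha hs'; case: c H liftH hs' => H liftH hs' /=.
all: repeat (case: eqP => ?).
all: rewrite ?rel_conj ?hu6 //=.
all: try (apply/andP; split).
all: first [ apply: (liftH Rl) | apply: (liftH Rm) | apply: (liftH Rr) ]; try reflexivity.
all: try lia.
all: relat.
Qed.


Fixpoint closS (T : eqType) (sc : T -> seq T) (fuel : nat) (todo acc : seq T) : seq T :=
  match fuel with 0 => acc | fuel'.+1 =>
  match todo with [::] => acc | t :: todo' =>
    let nw := undup [seq x <- sc t | x \notin acc] in
    closS sc fuel' (nw ++ todo') (nw ++ acc) end end.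

Definition start : state := (false, pi0, pi0, pi0).
Definition SL : seq state :=
  Eval vm_compute in closS (fun st => [:: desc st false; desc st true]) 100 [:: start] [:: start].

Definition sqcheck (st : state) P (t : seq nat) :=
  all (fun s => relt (relAt st P s) (nth 0 t s) (nth 0 t (s + P))) (iota 0 (P + stc st)).

Definition gE (e : nat) (t : seq nat) := map rho (take 7 (drop e (f_seq t))).

Definition checks_A :=
  [&& start \in SL,
      all (fun st => (desc st false \in SL) && (desc st true \in SL)) SL,
      all (fun st => all (fun x => all (fun y => relt (stm st) x y ==> (rho x == rho y))
                   (iota 0 6)) (iota 0 6)) SL,
      all (fun x => x \notin map (gE 1) TT) (map (gE 0) TT) &
      all (fun P => all (fun st => all (fun t => ~~ sqcheck st P t) TT) SL) (iota 3 15)].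

Lemma checks_A_ok : checks_A.
Proof. vm_compute. reflexivity. Qed.

Lemma relAt_mid st P s : s != 0 -> s != P + stc st - 1 -> relAt st P s = stm st.
Proof. by case: st => [[[c Rl] Rm] Rr] /= /negPf -> /negPf ->. Qed.

Lemma nth_rho_ufac i m k : k < m -> nth false (map rho (ufac i m)) k = rho (u (i + k)).
Proof. by move=> hk; rewrite /ufac -map_comp (nth_map 0) ?size_iota // nth_iota. Qed.

Lemma no_Sq P : 3 <= P -> forall st a, st \in SL -> ~ Sq st P a.
Proof.
case/and5P: checks_A_ok => _ /allP Hcl /allP Hmid Hrec /allP Hbase.
elim: P {-2}P (leqnn P) => [|N IH] P hPN hP st a hst HS; first lia.
case: (ltnP P 18) => hP18.
  have := Hbase P; rewrite mem_iota => /(_ ltac:(lia)) /allP /(_ st hst) /allP.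
  move=> /(_ _ (ufac_in a)) /negP; apply.
  apply/allP => s; rewrite mem_iota => /andP [_ hs].
  have hc : stc st <= 1 by case: (stc st).
  rewrite !nth_ufac; [| rewrite /M; lia | rewrite /M; lia].
  rewrite addnA; exact: HS.
case hodd: (odd P).
  have hrho : forall t, t < 7 -> rho (u (a.+1 + t)) = rho (u (a.+1 + P + t)).
    move=> t ht.
    have := HS t.+1 ltac:(case: (stc st); lia).
    rewrite relAt_mid; [| by [] | apply/eqP; case: (stc st); lia].
    move=> hr.
    have := Hmid st hst; move=> /allP /(_ (u (a + t.+1))).
    rewrite mem_iota u_lt6 => /(_ isT) /allP /(_ (u (a + t.+1 + P))).
    rewrite mem_iota u_lt6 => /(_ isT) /implyP /(_ hr) /eqP.
    by rewrite !addSn -!addnS [a + P + _]addnAC.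
  have heq : map rho (ufac a.+1 7) = map rho (ufac (a.+1 + P) 7).
    apply: (@eq_from_nth _ false); first by rewrite !size_map ?size_ufac ?size_iota.
    move=> k; rewrite !size_map ?size_iota => hk.
    by rewrite !nth_rho_ufac // hrho.
  rewrite (@ufac_desub a.+1 7 M) // (@ufac_desub (a.+1 + P) 7 M) // in heq.
  have h1 := ufac_in (a.+1)./2; have h2 := ufac_in (a.+1 + P)./2.
  have hpar : odd (a.+1 + P) = ~~ odd a.+1 by rewrite oddD hodd; case: (odd a.+1).
  rewrite hpar in heq.
  have key : forall t1 t2, t1 \in TT -> t2 \in TT -> gE 0 t1 <> gE 1 t2.
    move=> t1 t2 ht1 ht2 he.
    move: Hrec => /allP /(_ (gE 0 t1) (map_f _ ht1)).
    by rewrite he (map_f _ ht2).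
  change (gE (odd a.+1) (ufac (a.+1)./2 M) = gE (~~ odd a.+1) (ufac (a.+1 + P)./2 M)) in heq.
  case: (odd a.+1) heq => heq.
    exact: (key _ _ h2 h1 (esym heq)).
  exact: (key _ _ h1 h2 heq).
have hd := desc_ok HS (negbT hodd) hP18.
apply: (IH P./2 _ _ (desc st (odd a)) a./2 _ hd); [lia | lia |].
by case/andP: (Hcl st hst); case: (odd a).
Qed.

Theorem partA : no_square_of_order_ge w_word 3.
Proof.
move=> s n [i hi] [x [hx [hn hs]]].
case: (ltnP n 3) => // hn3; exfalso.
apply: (@no_Sq n hn3 start i); first by case/and5P: checks_A_ok.
move=> k hk; rewrite /= addn0 in hk.
have hrel : forall y z, relt (relAt start n k) y z = relt pi0 y z.
  by move=> y z; rewrite /relAt /start; case: ifP => //; case: ifP.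
rewrite hrel rel_pi0 ?u_lt6 //.
have hsz : size s = n + n by rewrite hs size_cat hx.
have e1 : nth false s k = w_word (i + k).
  by rewrite -hi /factor_at (nth_map 0) ?size_iota ?nth_iota //; lia.
have e2 : nth false s (k + n) = w_word (i + (k + n)).
  by rewrite -hi /factor_at (nth_map 0) ?size_iota ?nth_iota //; lia.
have : nth false s k = nth false s (k + n).
  by rewrite hs !nth_cat hx hk ltnNge leq_addl /= addnK.
move=> h; apply/eqP; move: e1 e2; rewrite /w_word h addnA => <- ->.
by [].
Qed.


Definition Aw : dfao2 6 := @Dfao2 6 ord0 (fun q b => inord (fstep q b)) (fun q => rho q).

Lemma Aw_run n : val (run (delta Aw) (q0 Aw) n) = ufast n.
Proof.
elim: n {-2}n (leqnn n) => [|N IH] n hn.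
  by have -> : n = 0 by lia.
case: (posnP n) => [->//|np].
rewrite run_rec // [RHS]run_rec // -/(ufast _) -IH; last lia.
by rewrite /= inordK // fstep_lt6.
Qed.

Theorem partC : two_automatic_le 6 w_word.
Proof.
exists 6; split => //; exists Aw => n.
by rewrite /w_word /= -/(run _ _ n) Aw_run ufast_f_fix.
Qed.

Lemma factor_w i len : factor_at w_word i len = [seq rho (ufast k) | k <- iota i len].
Proof.
rewrite /factor_at -(addn0 i) iotaDl -map_comp addn0.
by apply: eq_map => k /=; rewrite /w_word ufast_f_fix.
Qed.

Definition Ssq : seq (seq bool) :=
  [:: [:: false; false]; [:: true; true]; [:: false; false; false; false];
      [:: false; true; false; true]; [:: true; false; true; false]].

Lemma no1111 : all (fun t => map rho (take 4 t) != [:: true; true; true; true]) TT.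
Proof. vm_compute. reflexivity. Qed.

Theorem partB : num_distinct_squares w_word 5.
Proof.
exists Ssq; split; first by []. split; first by [].
move=> s; split.
  rewrite !inE => /orP[/eqP->|/orP[/eqP->|/orP[/eqP->|/orP[/eqP->|/eqP->]]]].
  - split; first by exists 1, [:: false].
    by exists 0; rewrite factor_w; vm_compute.
  - split; first by exists 1, [:: true].
    by exists 4; rewrite factor_w; vm_compute.
  - split; first by exists 2, [:: false; false].
    by exists 0; rewrite factor_w; vm_compute.
  - split; first by exists 2, [:: false; true].
    by exists 8; rewrite factor_w; vm_compute.
  - split; first by exists 2, [:: true; false].
    by exists 9; rewrite factor_w; vm_compute.
move=> [[n hsq] hf].
have hn3 := partA hf hsq.
case: hsq => x [hx [hn hs]].
move: hf; rewrite hs => -[i hi].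
case: x hx hs hi => [|a [|b [|c x]]] //= hx; try lia.
- by move=> _ _; case: a.
- move=> _ hi.
  case: a hi => [|]; case: b => [|] hi //.
  exfalso.
  move: no1111 => /allP /(_ _ (ufac_in i)) /negP; apply.
  apply/eqP; rewrite -hi factor_w.
  rewrite /ufac -map_take take_iota -map_comp (_ : minn 4 M = 4) //.
  by apply: eq_map => k; rewrite /= ufast_f_fix.
Qed.


Record sstate := SS {
  sdl : seq (option nat);
  souts : seq bool;
  sp : nat; sd : bool;
  sQ : seq nat;
  spre : seq bool;
  ssqs : seq (seq bool);
  sless : bool;
  sW : seq bool }.

Fixpoint eqpre (k : nat) (a b : seq bool) : bool :=
  match k with 0 => true | k'.+1 =>
    match a, b with
    | x :: a', y :: b' => if x == y then eqpre k' a' b' else false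
    | _, _ => false end end.

Fixpoint chk (pre rest : seq bool) (L fuel : nat) (sqs : seq (seq bool)) :
    option (seq (seq bool)) :=
  match fuel with 0 => Some sqs | fuel'.+1 =>
  match rest with [::] => Some sqs | _ :: rest' =>
    if eqpre L.+1 pre rest' then
      if 3 <= L.+1 then None else
      let sq := rev (take (L.+1).*2 pre) in
      let sqs' := if sq \in sqs then sqs else sq :: sqs in
      if 5 < size sqs' then None else chk pre rest' L.+1 fuel' sqs'
    else chk pre rest' L.+1 fuel' sqs end end.

Definition bsucc (dl : seq (option nat)) (ab : nat * nat) : seq (nat * nat) :=
  [seq (t, fstep ab.2 b) | b <- [:: false; true],
     t <- match nth None dl (ab.1.*2 + b) with Some t => [:: t] | None => [::] end].

Definition bisim_ok (dl : seq (option nat)) (outs : seq bool) t0 (V : seq (nat * nat)) :=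
  ((t0, 1) \in V) &&
  all (fun ab => (nth false outs ab.1 == rho ab.2) &&
     all (fun b : bool => match nth None dl (ab.1.*2 + b) with
                          | Some t => (t, fstep ab.2 b) \in V | None => false end)
       [:: false; true]) V.

Definition bisim (dl : seq (option nat)) (outs : seq bool) : bool :=
  match nth None dl 1 with
  | Some t0 => bisim_ok dl outs t0 (closS (bsucc dl) 50 [:: (t0, 1)] [:: (t0, 1)])
  | None => false end.

Definition LMAX := 40.

Definition cont (rec : sstate -> bool) (st : sstate) (t : nat) (c less' : bool) (W' : seq bool) :=
  let pre' := c :: spre st in
  match chk pre' pre' 0 LMAX (ssqs st) with
  | None => true
  | Some sqs' =>
    if sd st then
      match rcons (sQ st) t with
      | [::] => false
      | p' :: Q' => rec (SS (sdl st) (souts st) p' false Q' pre' sqs' less' W')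
      end
    else rec (SS (sdl st) (souts st) (sp st) true (rcons (sQ st) t) pre' sqs' less' W')
  end.

Definition step (rec : sstate -> bool) (st : sstate) (t : nat) (newdef : bool) :=
  let c := nth false (souts st) t in
  if (if newdef then (if sless st then false else bisim (sdl st) (souts st)) else false)
  then true else
  if sless st then cont rec st t c true [::]
  else match sW st with
    | [::] => false
    | wc :: W' => if c == wc then cont rec st t c false W'
                  else if c then true else cont rec st t c true [::]
    end.

Definition setdl (st : sstate) i t :=
  SS (set_nth None (sdl st) i (Some t)) (souts st) (sp st) (sd st) (sQ st) (spre st)
     (ssqs st) (sless st) (sW st).
Definition setnew (st : sstate) i o :=
  SS (set_nth None (sdl st) i (Some (size (souts st)))) (rcons (souts st) o) (sp st) (sd st)
     (sQ st) (spre st) (ssqs st) (sless st) (sW st).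

Fixpoint search (fuel : nat) (st : sstate) : bool :=
  match fuel with 0 => false | fuel'.+1 =>
  let i := (sp st).*2 + sd st in
  match nth None (sdl st) i with
  | Some t => step (search fuel') st t false
  | None =>
    let ns := size (souts st) in
    all (fun t => step (search fuel') (setdl st i t) t true) (iota 0 ns) &&
    (if ns < 6 then
       step (search fuel') (setnew st i false) ns true &&
       step (search fuel') (setnew st i true) ns true
     else true)
  end end.

Definition Wlist := Eval vm_compute in [seq rho (ufast k) | k <- iota 1 300].
Definition st0 := SS (nseq 12 None) [:: false] 0 true [::] [:: false] [::] false Wlist.

Lemma search_ok : search 400 st0.
Proof. vm_cast_no_check (erefl true). Qed.

Lemma Wlist_eq : Wlist = [seq rho (ufast k) | k <- iota 1 300].
Proof. vm_compute. reflexivity. Qed.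


Lemma w_ufast k : w_word k = rho (ufast k).
Proof. by rewrite /w_word ufast_f_fix. Qed.

Lemma eqpre_sound k a b : eqpre k a b -> take k a = take k b /\ k <= size a /\ k <= size b.
Proof.
elim: k a b => [|k IH] [|x a] [|y b] //=.
case: eqP => // -> /IH [-> [h1 h2]]; split => //; lia.
Qed.

Lemma drop_S (T : Type) n (l : seq T) : drop n.+1 l = behead (drop n l).
Proof. by rewrite -add1n -drop_drop drop1. Qed.

Lemma factor_map (v : bword) i len : factor_at v i len = map v (iota i len).
Proof. by rewrite /factor_at -(addn0 i) iotaDl -map_comp addn0. Qed.

Section Sound.
Variables (s : nat) (A : dfao2 s) (v : bword).
Hypotheses (hs6 : s <= 6) (HA : generates A v) (Hsq : no_square_of_order_ge v 3)
  (H5 : num_distinct_squares v 5).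

Definition stA n := run (delta A) (q0 A) n.
Lemma v_stA n : v n = out A (stA n). Proof. exact: HA. Qed.
Lemma stA_rec n : 0 < n -> stA n = delta A (stA n./2) (odd n).
Proof. exact: run_rec. Qed.

Lemma stA_eq a b : a = b -> stA a = stA b. Proof. by move=> ->. Qed.

Lemma inj_le k (phi : nat -> 'I_s) :
  (forall a b, a < k -> b < k -> phi a = phi b -> a = b) -> k <= s.
Proof.
move=> hinj.
have := @leq_card _ _ (fun j : 'I_k => phi j) _.
rewrite !card_ord; apply.
by move=> x y /hinj h; apply: val_inj; apply: h.
Qed.

Definition sq_inv (sqs : seq (seq bool)) :=
  uniq sqs /\ forall x, x \in sqs -> is_square x /\ is_factor v x.

Lemma sq_bound sqs : sq_inv sqs -> size sqs <= 5.
Proof.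
case: H5 => S [uS [szS hS]] [us hsqs].
rewrite -szS; apply: uniq_leq_size => // x /hsqs /hS //.
Qed.

Lemma pre_square N L pre : pre = rev (map v (iota 0 N)) -> 0 < L -> L.*2 <= N ->
  take L pre = take L (drop L pre) ->
  is_square_of_order (rev (take L.*2 pre)) L /\ is_factor v (rev (take L.*2 pre)).
Proof.
move=> hpre hL hN heq.
have hsz : size pre = N by rewrite hpre size_rev size_map size_iota.
split.
  exists (rev (take L pre)); split; first by rewrite size_rev size_takel //; lia.
  split => //.
  by rewrite -addnn takeD rev_cat -heq.
exists (N - L.*2).
rewrite factor_map size_rev size_takel ?hsz // hpre take_rev revK size_map size_iota.
by rewrite -map_drop drop_iota add0n; congr (map v (iota _ _)); lia.
Qed.

Lemma chk_cons pre x rest' L fuel sqs : chk pre (x :: rest') L fuel.+1 sqs =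
    if eqpre L.+1 pre rest' then
      if 3 <= L.+1 then None else
      let sq := rev (take (L.+1).*2 pre) in
      let sqs' := if sq \in sqs then sqs else sq :: sqs in
      if 5 < size sqs' then None else chk pre rest' L.+1 fuel sqs'
    else chk pre rest' L.+1 fuel sqs.
Proof. by []. Qed.

Lemma chk_sound fuel L pre rest sqs N :
  pre = rev (map v (iota 0 N)) -> rest = drop L pre -> sq_inv sqs ->
  match chk pre rest L fuel sqs with None => False | Some sqs' => sq_inv sqs' end.
Proof.
move=> hpre.
have hsz : size pre = N by rewrite hpre size_rev size_map size_iota.
elim: fuel L rest sqs => [|fuel IH] L rest sqs hrest hsqs /=; first by case: rest {hrest}.
case: rest hrest => [//|x rest'] hrest.
have hr' : rest' = drop L.+1 pre by rewrite drop_S -hrest.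
rewrite chk_cons; case he: (eqpre L.+1 pre rest'); last by apply: IH.
have [ht [_ hs']] := eqpre_sound he.
rewrite hr' in ht hs'.
have hN : (L.+1).*2 <= N by rewrite size_drop hsz in hs'; lia.
have [hsq hfac] := pre_square hpre (ltn0Sn L) hN ht.
case: ifP => h3.
  by have := Hsq hfac hsq; lia.
set sq := rev _.
have hinv : sq_inv (if sq \in sqs then sqs else sq :: sqs).
  case: hsqs => us hm; case: ifP => hin; first by split.
  split; first by rewrite /= hin.
  move=> y; rewrite inE => /orP [/eqP ->|/hm] //; split => //; by exists L.+1.
cbv zeta; case: ifP => h5.
  by have := sq_bound hinv; lia.
exact: IH.
Qed.


Record Inv (st : sstate) (n : nat) (phi : nat -> 'I_s) : Prop := MkInv {
  i_n : 0 < n;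
  i_q0 : phi 0 = q0 A;
  i_inj : forall a b, a < size (souts st) -> b < size (souts st) -> phi a = phi b -> a = b;
  i_dlsz : size (sdl st) = 12;
  i_dl : forall i t, nth None (sdl st) i = Some t ->
           [/\ i./2 < size (souts st), t < size (souts st) & delta A (phi i./2) (odd i) = phi t];
  i_out : forall q, q < size (souts st) -> nth false (souts st) q = out A (phi q);
  i_p : sp st < size (souts st);
  i_pphi : phi (sp st) = stA n./2;
  i_d : sd st = odd n;
  i_Qsz : size (sQ st) = n.-1 - n./2;
  i_Q : forall k, k < size (sQ st) ->
          nth 0 (sQ st) k < size (souts st) /\ phi (nth 0 (sQ st) k) = stA (n./2 + 1 + k);
  i_pre : spre st = rev (map v (iota 0 n));
  i_sqs : sq_inv (ssqs st);
  i_less : sless st -> exists j, [/\ j < n, (forall i, i < j -> w_word i = v i),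
                                     w_word j = true & v j = false];
  i_eq : ~~ sless st -> (forall i, i < n -> w_word i = v i) /\
           (forall k, k < size (sW st) -> nth false (sW st) k = w_word (n + k)) }.

Definition rec_sound (rec : sstate -> bool) :=
  forall st n phi, Inv st n phi -> rec st -> lex_le w_word v.

Lemma cont_sound rec st n phi t (c less' : bool) (W' : seq bool) :
  rec_sound rec -> Inv st n phi -> t < size (souts st) -> phi t = stA n -> c = v n ->
  (less' -> exists j, [/\ j < n.+1, (forall i, i < j -> w_word i = v i),
                          w_word j = true & v j = false]) ->
  (~~ less' -> (forall i, i < n.+1 -> w_word i = v i) /\
     (forall k, k < size W' -> nth false W' k = w_word (n.+1 + k))) ->
  cont rec st t c less' W' -> lex_le w_word v.
Proof.
move=> hrec I ht hphit hc hl he.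
have hpre' : c :: spre st = rev (map v (iota 0 n.+1)).
  by rewrite -addn1 iotaD map_cat rev_cat /= (i_pre I) hc.
rewrite /cont.
have := @chk_sound LMAX 0 _ (c :: spre st) (ssqs st) _ hpre' (erefl _) (i_sqs I).
case: (chk _ _ _ _ _) => [sqs'|//] hsqs'.
have QT : forall k, k < size (rcons (sQ st) t) ->
    nth 0 (rcons (sQ st) t) k < size (souts st) /\
    phi (nth 0 (rcons (sQ st) t) k) = stA (n./2 + 1 + k).
  move=> k; rewrite size_rcons ltnS leq_eqVlt => /orP [/eqP ->|hk].
    rewrite nth_rcons ltnn eqxx; split => //; rewrite hphit (i_Qsz I).
    have hn0 := i_n I; rewrite (_ : n./2 + 1 + (n.-1 - n./2) = n) //; lia.
  by rewrite nth_rcons hk; apply: (i_Q I).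
have hQsz := i_Qsz I.
have hn := i_n I.
case hd: (sd st).
  have hodd : odd n by rewrite -(i_d I).
  case hR: (rcons (sQ st) t) => [|p' Q']; first by case: (sQ st) hR.
  apply: (hrec _ n.+1 phi).
  constructor; try exact: (i_q0 I); try exact: (i_inj I); try exact: (i_dlsz I);
     try exact: (i_dl I); try exact: (i_out I); try exact: hpre'; try exact: hsqs';
     try exact: hl; try exact: he; try exact: (ltn0Sn n).
  - by have := QT 0; rewrite hR => /(_ isT) [].
  - have := QT 0; rewrite hR => /(_ isT) [_ ->]; apply: stA_eq; lia.
  - by rewrite [odd _]/= hodd.
  - have := congr1 size hR; rewrite size_rcons [size (_ :: _)]/= hQsz [sQ _]/=; lia.
  - move=> k /= hk; have := QT k.+1; rewrite hR /= => /(_ hk) [h1 h2].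
    split => //; rewrite h2; apply: stA_eq; rewrite ?uphalfE; lia.
apply: (hrec _ n.+1 phi).
have hev : ~~ odd n by rewrite -(i_d I) hd.
constructor; try exact: (i_q0 I); try exact: (i_inj I); try exact: (i_dlsz I);
   try exact: (i_dl I); try exact: (i_out I); try exact: hpre'; try exact: hsqs';
   try exact: hl; try exact: he; try exact: (ltn0Sn n); try exact: (i_p I).
- rewrite [sp _]/= (i_pphi I); apply: stA_eq; lia.
- by rewrite [odd _]/= hev.
- rewrite [sQ _]/= size_rcons hQsz; lia.
- move=> k; rewrite [sQ _]/= -(_ : n./2 = n.+1./2); last by lia.
  exact: QT.
Qed.


Lemma ns_le6 st n phi : Inv st n phi -> size (souts st) <= 6.
Proof. move=> I; apply: leq_trans hs6; exact: (inj_le (i_inj I)). Qed.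

Lemma bisim_sound st n phi : Inv st n phi -> bisim (sdl st) (souts st) ->
  forall k, 0 < k -> w_word k = v k.
Proof.
move=> I; rewrite /bisim.
case h1: (nth None (sdl st) 1) => [t0|//].
move: (closS _ _ _ _) => V /andP [hin /allP hall].
have claim : forall k, 0 < k -> exists a, [/\ (a, ufast k) \in V, a < size (souts st) &
                                          phi a = stA k].
  move=> k; elim: k {-2}k (leqnn k) => [|K IH] k hk kpos; first lia.
  case: (ltnP k 2) => hk2.
    have -> : k = 1 by lia.
    have [_ ht0 hd0] := i_dl I h1.
    exists t0; split => //.
    by rewrite -hd0 /= (i_q0 I) stA_rec.
  have [a [ha hans haphi]] := IH k./2 ltac:(lia) ltac:(lia).
  have := hall _ ha; case/andP => hout /allP /(_ (odd k)).
  rewrite inE => /(_ (ltac:(by case: (odd k)))) /=.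
  case hj: (nth None (sdl st) (a.*2 + odd k)) => [t|//] htV.
  have [_ htns htd] := i_dl I hj.
  exists t; split => //.
    have hu : ufast k = fstep (ufast k./2) (odd k) by rewrite /ufast run_rec //; lia.
    by rewrite hu.
  rewrite -htd stA_rec; last lia.
  rewrite -haphi; congr (delta A (phi _) _); lia.
move=> k kpos; have [a [ha hans haphi]] := claim k kpos.
have := hall _ ha; case/andP => /eqP hout _.
by rewrite w_ufast -hout (i_out I hans) v_stA haphi.
Qed.


Lemma step_sound rec st n phi t newdef :
  rec_sound rec -> Inv st n phi -> t < size (souts st) -> phi t = stA n ->
  step rec st t newdef -> lex_le w_word v.
Proof.
move=> hrec I ht hphit.
have hc : nth false (souts st) t = v n by rewrite (i_out I ht) hphit v_stA.
rewrite /step hc.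
case hb: (if newdef then (if sless st then false else bisim (sdl st) (souts st)) else false).
  move=> _; left => k.
  case: (posnP k) => [->|kpos].
    move: hb; case: newdef => //; case hl: (sless st) => // _.
    have [he _] := i_eq I (negbT hl); exact: he (i_n I).
  move: hb; case: newdef => //; case: (sless st) => // hb.
  exact: (bisim_sound I hb).
case hl: (sless st).
  apply: (cont_sound hrec I ht hphit (erefl _)) => //.
  move=> _; have [j [hj h1 h2 h3]] := i_less I hl; exists j; split => //; lia.
have [heq hW] := i_eq I (negbT hl).
case hW': (sW st) => [//|wc W'].
have hwc : wc = w_word n by have := hW 0; rewrite hW' addn0 => /(_ isT).
case: eqP => [hcw|hcw].
  apply: (cont_sound hrec I ht hphit (erefl _)) => //.
  move=> _; split.
    move=> i hi; case: (ltnP i n) => hin; first exact: heq.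
    have -> : i = n by lia.
    by rewrite hcw hwc.
  move=> k hk; have := hW k.+1; rewrite hW' /= => /(_ hk) ->; congr w_word; lia.
case hvn: (v n).
  move=> _; right; exists n; split; first exact: heq.
  split => //; rewrite -hwc; move: hcw; rewrite hvn; by case: (wc).
move=> /= hcont; apply: (cont_sound hrec I ht hphit (esym hvn) _ _ hcont) => // _.
exists n; split => //; rewrite -hwc; move: hcw; rewrite hvn; by case: (wc).
Qed.

Lemma setdl_inv st n phi t :
  Inv st n phi -> nth None (sdl st) ((sp st).*2 + sd st) = None ->
  t < size (souts st) -> phi t = delta A (phi (sp st)) (sd st) ->
  Inv (setdl st ((sp st).*2 + sd st) t) n phi.
Proof.
move=> I hnone ht hphit.
have hns := ns_le6 I.
have hp := i_p I.
constructor; try exact: (i_n I); try exact: (i_q0 I); try exact: (i_inj I);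
  try exact: (i_out I); try exact: (i_p I); try exact: (i_pphi I); try exact: (i_d I);
  try exact: (i_Qsz I); try exact: (i_Q I); try exact: (i_pre I); try exact: (i_sqs I);
  try exact: (i_less I); try exact: (i_eq I).
- rewrite /= size_set_nth (i_dlsz I); case: (sd st); lia.
- move=> j t'; rewrite /= nth_set_nth /=; case: eqP => [->|_]; last exact: (i_dl I).
  case=> <-; split => //.
  + case: (sd st); lia.
  + rewrite hphit; congr (delta A (phi _) _); case: (sd st); rewrite ?odd_double //=; lia.
Qed.

Lemma setnew_inv st n phi (o : bool) :
  Inv st n phi -> nth None (sdl st) ((sp st).*2 + sd st) = None ->
  ~~ has (fun t => phi t == delta A (phi (sp st)) (sd st)) (iota 0 (size (souts st))) ->
  o = out A (delta A (phi (sp st)) (sd st)) ->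
  Inv (setnew st ((sp st).*2 + sd st) o) n
      (fun q => if q == size (souts st) then delta A (phi (sp st)) (sd st) else phi q).
Proof.
move=> I hnone hnot ho.
have hns := ns_le6 I.
have hp := i_p I.
set ns := size (souts st).
set tg := delta A (phi (sp st)) (sd st).
have hnot' : forall q, q < ns -> phi q != tg.
  move=> q hq; apply/negP => hq'; move/negP: hnot; apply.
  by apply/hasP; exists q; rewrite ?mem_iota.
have hsz : size (souts (setnew st ((sp st).*2 + sd st) o)) = ns.+1 by rewrite /= size_rcons.
have hphi : forall q, q < ns -> (if q == ns then tg else phi q) = phi q.
  by move=> q hq; have -> : (q == ns) = false by apply/eqP; lia.
constructor; rewrite ?hsz.
- exact: (i_n I).
- by rewrite hphi ?(i_q0 I) //; lia.
- move=> a b ha hb; case: (ltnP a ns) => ha'; case: (ltnP b ns) => hb'.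
  + rewrite !hphi //; exact: (i_inj I).
  + have -> : b = ns by lia. rewrite eqxx hphi // => hab.
    by have := hnot' a ha'; rewrite hab eqxx.
  + have -> : a = ns by lia. rewrite eqxx hphi // => hab.
    by have := hnot' b hb'; rewrite -hab eqxx.
  + lia.
- rewrite /= size_set_nth (i_dlsz I); case: (sd st); lia.
- move=> j t'; rewrite /= nth_set_nth /=; case: eqP => [->|_].
    case=> <-; split.
    + case: (sd st); lia.
    + lia.
    + rewrite eqxx.
      have -> : ((sp st).*2 + sd st)./2 = sp st by case: (sd st); lia.
      rewrite hphi // /tg; congr (delta A _ _); case: (sd st); rewrite ?odd_double //=; lia.
  move=> hj; have [h1 h2 h3] := i_dl I hj; split; try lia.
  by rewrite !hphi.
- move=> q hq; rewrite /= nth_rcons.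
  case: (ltnP q ns) => hq'.
    by rewrite hphi // (i_out I).
  have -> : q = ns by lia.
  by rewrite /ns !eqxx ho.
- rewrite /=; lia.
- by rewrite /= hphi // (i_pphi I).
- exact: (i_d I).
- exact: (i_Qsz I).
- move=> k hk; have [h1 h2] := i_Q I hk; rewrite /=; split; first lia.
  by rewrite hphi.
- exact: (i_pre I).
- exact: (i_sqs I).
- exact: (i_less I).
- exact: (i_eq I).
Qed.



Lemma search_sound fuel : rec_sound (search fuel).
Proof.
elim: fuel => [|fuel IH] st n phi I //=.
have hp := i_p I.
have hns := ns_le6 I.
have htg : delta A (phi (sp st)) (sd st) = stA n.
  rewrite (i_pphi I) (i_d I) -stA_rec //; exact: (i_n I).
case hdl: (nth None (sdl st) ((sp st).*2 + sd st)) => [t|].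
  have [h1 h2 h3] := i_dl I hdl.
  apply: (step_sound IH I h2).
  rewrite -h3 -htg; congr (delta A (phi _) _); case: (sd st); rewrite ?odd_double //=; lia.
case/andP => hall hnew.
case: (boolP (has (fun t => phi t == delta A (phi (sp st)) (sd st))
                   (iota 0 (size (souts st))))).
  case/hasP => t; rewrite mem_iota add0n => /andP [_ ht] /eqP hphit.
  have := allP hall t; rewrite mem_iota add0n ht => /(_ isT).
  apply: (step_sound IH (setdl_inv I hdl ht hphit)) => //=.
  by rewrite hphit.
move=> hnot.
set ns := size (souts st).
set phi' := fun q => if q == ns then delta A (phi (sp st)) (sd st) else phi q.
have hlt : ns < 6.
  have : ns.+1 <= s.
    apply: (@inj_le _ phi') => a b ha hb.
    rewrite /phi'.
    have hnot' : forall q, q < ns -> phi q != delta A (phi (sp st)) (sd st).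
      move=> q hq; apply/negP => hq'; move/negP: hnot; apply.
      by apply/hasP; exists q; rewrite ?mem_iota.
    case: eqP => [ea|na]; case: eqP => [eb|nb].
    + by rewrite ea eb.
    + move=> hab; have := hnot' b ltac:(lia); by rewrite hab eqxx.
    + move=> hab; have := hnot' a ltac:(lia); by rewrite -hab eqxx.
    + apply: (i_inj I); lia.
  lia.
move: hnew; rewrite hlt.
case hout: (out A (delta A (phi (sp st)) (sd st))) => /andP [hf ht].
  have I' := setnew_inv (o := true) I hdl hnot (esym hout).
  apply: (step_sound IH I' _ _ ht); first by rewrite /= size_rcons.
  by rewrite /= eqxx.
have I' := setnew_inv (o := false) I hdl hnot (esym hout).
apply: (step_sound IH I' _ _ hf); first by rewrite /= size_rcons.
by rewrite /= eqxx.
Qed.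

Theorem lex_min : lex_le w_word v.
Proof.
case hv0: (v 0).
  right; exists 0; split => //; split => //.
pose phi0 := fun _ : nat => q0 A.
apply: (search_sound (phi := phi0) (n := 1) _ search_ok).
constructor.
- by [].
- by [].
- by case=> [|a] [|b].
- by [].
- move=> i t; rewrite (_ : sdl st0 = nseq 12 None) // nth_nseq; by case: ifP.
- move=> q; rewrite /= ltnS leqn0 => /eqP -> /=; rewrite (_ : out A (phi0 0) = v 0) ?hv0 //; by rewrite -hv0 v_stA.
- by [].
- by [].
- by [].
- by [].
- by [].
- by rewrite /= hv0.
- by split.
- by [].
- move=> _; split.
  + by move=> i; rewrite ltnS leqn0 => /eqP ->; rewrite hv0.
  + move=> k; change (sW st0) with Wlist; rewrite Wlist_eq size_map size_iota => hk.
    by rewrite (nth_map 0) ?size_iota // nth_iota // w_ufast add1n.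
Qed.

End Sound.


Theorem theorem1 :
  no_square_of_order_ge w_word 3 /\
  num_distinct_squares w_word 5 /\
  (two_automatic_le 6 w_word /\
   forall v : bword,
     two_automatic_le 6 v ->
     no_square_of_order_ge v 3 ->
     num_distinct_squares v 5 ->
     lex_le w_word v).
Proof.
split; first exact: partA.
split; first exact: partB.
split; first exact: partC.
move=> v [s [hs [A hA]]] hsq h5.
exact: (lex_min hs hA hsq h5).
Qed.
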